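(* In an orbit-finite monoid, a sequence $x_1,\dots,x_n$ (with $n\ge 2$) is smooth if and only if for every $i<n$ the two-element sequence $x_i,x_{i+1}$ is smooth.
   Context: Atoms $\mathbb A$ are a countably infinite set acted on by its bijections (atom automorphisms). An orbit-finite monoid is a monoid whose underlying set is orbit-finite (every element finitely supported, and for some tuple $\bar a$ of atoms the set is a union of finitely many orbits of the group of automorphisms fixing $\bar a$ pointwise) and whose multiplication is finitely supported. A sequence $x_1,\dots,x_n$ of monoid elements is smooth if for every $i\in\{1,\dots,n\}$ there exist monoid elements $y,z$ with $y\,x_1\cdots x_n\,z=x_i$. *)

(* Defs.v *)
(* Atoms are modelled by nat; atom automorphisms are
   bijections nat -> nat. *)
From mathcomp Require Import all_boot.
Set Implicit Arguments. Unset Strict Implicit. Unset Printing Implicit Defensive.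

Definition fixes (pi : nat -> nat) (s : seq nat) : Prop :=
  forall a, a \in s -> pi a = a.

Record orbitFiniteMonoid := OrbitFiniteMonoid {
  carrier : Type;
  act : (nat -> nat) -> carrier -> carrier;
  mul : carrier -> carrier -> carrier;
  mone : carrier;
  act_id : forall x, act id x = x;
  act_comp : forall pi sigma x, bijective pi -> bijective sigma ->
     act (pi \o sigma) x = act pi (act sigma x);
  act_fin_supp : forall x, exists s : seq nat,
     forall pi, bijective pi -> fixes pi s -> act pi x = x;
  orbit_finite : exists (abar : seq nat) (k : nat) (rep : nat -> carrier),
     forall x, exists i, i < k /\
       exists pi, [/\ bijective pi, fixes pi abar & x = act pi (rep i)];
  mulA : forall x y z, mul x (mul y z) = mul (mul x y) z;
  mul1x : forall x, mul mone x = x;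
  mulx1 : forall x, mul x mone = x;
  mul_fin_supp : exists s : seq nat, forall pi, bijective pi -> fixes pi s ->
     forall x y, act pi (mul x y) = mul (act pi x) (act pi y)
}.

Definition mprod (M : orbitFiniteMonoid) (xs : seq (carrier M)) : carrier M :=
  foldr (@mul M) (@mone M) xs.

Definition smooth (M : orbitFiniteMonoid) (xs : seq (carrier M)) : Prop :=
  forall i, i < size xs ->
    exists y z, mul (mul y (mprod xs)) z = nth (@mone M) xs i.

(* Main.v *)
Require Import Defs.
From mathcomp Require Import all_boot zify.
From Stdlib Require Import FunctionalExtensionality ClassicalEpsilon Classical.
Set Implicit Arguments. Unset Strict Implicit. Unset Printing Implicit Defensive.

Definition swapn (a b : nat) (x : nat) := if x == a then b else if x == b then a else x.
Lemma swapnK a b : involutive (swapn a b).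
Proof.
move=> x; rewrite /swapn.
case: (x =P a) => h1; case: (x =P b) => h2 ; repeat (case: eqP => //= ?); try congruence.
Qed.

Definition mx (S : seq nat) := foldr (fun s acc => maxn s.+1 acc) 0 S.
Lemma mx_gt s S : s \in S -> s < mx S.
Proof.
elim: S => [//|t S IH]; rewrite in_cons /= => /orP [/eqP ->|h]; first by rewrite leq_max leqnn.
by rewrite leq_max IH // orbT.
Qed.

Lemma compress (S P : seq nat) : exists tau, [/\ bijective tau, fixes tau S &
  forall p, p \in P -> tau p < mx S + size P].
Proof.
elim: P => [|p P [tau [btau ftau Htau]]].
  by exists id; split => //; apply: inv_bij.
case: (ltnP (tau p) (mx S + size P)) => hp.
  exists tau; split => // q; rewrite in_cons => /orP [/eqP ->|qP] /=; first lia.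
  have := Htau _ qP; lia.
exists (swapn (tau p) (mx S + size P) \o tau); split.
- by apply: bij_comp => //; apply: inv_bij; apply: swapnK.
- move=> s sS /=; rewrite (ftau s sS) /swapn.
  have := mx_gt sS => h.
  have -> : (s == tau p) = false by apply/eqP; lia.
  have -> : (s == mx S + size P) = false by apply/eqP; lia.
  by [].
- move=> q; rewrite in_cons => /orP [/eqP ->|qP] /=; rewrite /swapn.
    rewrite eqxx; lia.
  have := Htau _ qP => h.
  have -> : (tau q == tau p) = false by apply/eqP; lia.
  have -> : (tau q == mx S + size P) = false by apply/eqP; lia.
  lia.
Qed.

Lemma common_supp (M : orbitFiniteMonoid) (rep : nat -> carrier M) k :
  exists R : seq nat, forall i, i < k -> forall pi, bijective pi -> fixes pi R ->
    act pi (rep i) = rep i.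
Proof.
elim: k => [|k [R HR]]; first by exists [::].
have [s Hs] := act_fin_supp (rep k).
exists (R ++ s) => i ik pi bpi fpi.
have f1 : fixes pi R by move=> a ha; apply: fpi; rewrite mem_cat ha.
have f2 : fixes pi s by move=> a ha; apply: fpi; rewrite mem_cat ha orbT.
move: ik; rewrite ltnS leq_eqVlt => /orP [/eqP ->|ik]; first exact: Hs.
exact: HR.
Qed.

Lemma act_agree (M : orbitFiniteMonoid) (r : carrier M) R s1 s2 :
  (forall pi, bijective pi -> fixes pi R -> act pi r = r) ->
  bijective s1 -> bijective s2 -> {in R, s1 =1 s2} -> act s1 r = act s2 r.
Proof.
move=> Hr b1 b2 H; case: (b2) => g2 c2 c2'.
have e : s1 = s2 \o (g2 \o s1) by apply: functional_extensionality => x /=; rewrite c2'.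
have bg : bijective (g2 \o s1) by apply: bij_comp => //; exists s2.
rewrite e act_comp // Hr // => a aR /=; by rewrite H // c2.
Qed.

Fixpoint pw (M : orbitFiniteMonoid) (g : carrier M) n : carrier M :=
  if n is n'.+1 then Defs.mul g (pw g n') else g.

Lemma pwSr (M : orbitFiniteMonoid) (g : carrier M) n : pw g n.+1 = Defs.mul (pw g n) g.
Proof. elim: n => [//|n IH]; change (Defs.mul g (pw g n.+1) = Defs.mul (pw g n.+1) g); by rewrite {1}IH Defs.mulA. Qed.

Lemma pwD (M : orbitFiniteMonoid) (g : carrier M) a b : Defs.mul (pw g a) (pw g b) = pw g (a + b).+1.
Proof. elim: a => [//|a IH]; by rewrite /= -Defs.mulA IH. Qed.

Lemma pw_idem (M : orbitFiniteMonoid) (g : carrier M) n m : n < m -> pw g n = pw g m ->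
  exists l, Defs.mul (pw g l) (pw g l) = pw g l.
Proof.
move=> nm e.
have sh : forall t, pw g (n + t) = pw g (m + t).
  elim=> [|t IH]; first by rewrite !addn0.
  by rewrite !addnS /= IH.
set d := m - n.
have per : forall q j, n <= j -> pw g (j + q * d) = pw g j.
  elim=> [|q IH] j nj; first by rewrite mul0n addn0.
  have -> : j + q.+1 * d = (j + d) + q * d by rewrite mulSn addnA.
  rewrite IH; last lia.
  have -> : j + d = m + (j - n) by rewrite /d; lia.
  by rewrite -sh; congr pw; lia.
exists (n.+1 * d).-1.
rewrite pwD.
have -> : ((n.+1 * d).-1 + (n.+1 * d).-1).+1 = (n.+1 * d).-1 + n.+1 * d.
  have : 0 < n.+1 * d by rewrite muln_gt0 /d; lia.
  lia.
apply: per.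
have : 1 <= d by rewrite /d; lia.
nia.
Qed.

Lemma pw_repeat (M : orbitFiniteMonoid) (g : carrier M) :
  exists n m, n < m /\ pw g n = pw g m.
Proof.
have [s0 Hs0] := mul_fin_supp M.
have [sg Hsg] := act_fin_supp g.
set S := sg ++ s0.
have Hpw : forall n pi, bijective pi -> fixes pi S -> act pi (pw g n) = pw g n.
  move=> n pi bpi fpi.
  have f0 : fixes pi s0 by move=> a ha; apply: fpi; rewrite mem_cat ha orbT.
  have fg : fixes pi sg by move=> a ha; apply: fpi; rewrite mem_cat ha.
  elim: n => [|n IH] /=; first exact: Hsg.
  by rewrite Hs0 // IH Hsg.
have [abar [k [rep Hrep]]] := orbit_finite M.
have [R HR] := common_supp rep k.
set B := mx S + size R.
pose C := ('I_k.+1 * {ffun 'I_(size R) -> 'I_B.+1})%type.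
pose good n (c : C) := exists i sigma, [/\ i < k, bijective sigma,
   (forall a, a \in R -> sigma a < B), pw g n = act sigma (rep i) &
   c = (inord i, [ffun j : 'I_(size R) => inord (sigma (nth 0 R j))])].
have Hgood : forall n, exists c, good n c.
  move=> n; have [i [ik [pi [bpi _ e]]]] := Hrep (pw g n).
  have [tau [btau ftau Htau]] := compress S (map pi R).
  exists (inord i, [ffun j : 'I_(size R) => inord ((tau \o pi) (nth 0 R j))]), i, (tau \o pi); split => //.
  - exact: bij_comp.
  - move=> a aR /=; rewrite /B -(size_map pi); apply: Htau; exact: map_f.
  - by rewrite act_comp // -e Hpw.
pose cf n := proj1_sig (constructive_indefinite_description _ (Hgood n)).
have cfP : forall n, good n (cf n) := fun n => proj2_sig (constructive_indefinite_description _ (Hgood n)).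
have key : forall n m, cf n = cf m -> pw g n = pw g m.
  move=> n m; case: (cfP n) => i1 [s1 [ik1 b1 B1 e1 ->]].
  case: (cfP m) => i2 [s2 [ik2 b2 B2 e2 ->]].
  case=> ei ef.
  have ei' : i1 = i2.
    by move: ei => /(congr1 (@nat_of_ord _)); rewrite !inordK //; lia.
  subst i2; rewrite e1 e2; apply: (act_agree (HR _ ik1)) => // a aR.
  have jl : index a R < size R by rewrite index_mem.
  move/ffunP: ef => /(_ (Ordinal jl)); rewrite !ffunE => /(congr1 (@nat_of_ord _)) /=.
  rewrite nth_index // !inordK //.
    by have := B2 _ aR; lia.
  by have := B1 _ aR; lia.
pose N := #|{: C}|.+1.
pose f (j : 'I_N) := cf j.
have ninj : ~ injective f.
  move=> inj; have := leq_card f inj; by rewrite card_ord /N ltnn.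
have [j1 [j2 [e ne]]] : exists j1 j2, f j1 = f j2 /\ j1 <> j2.
  apply: NNPP => H; apply: ninj => j1 j2 e; apply: NNPP => ne; apply: H; exists j1, j2; split => //.
case: (ltngtP j1 j2) => h.
- by exists j1, j2; split => //; apply: key.
- by exists j2, j1; split => //; apply: key.
- by case: ne; apply: val_inj.
Qed.

Local Notation "x ** y" := (Defs.mul x y) (at level 40, left associativity).

Definition divJ (M : orbitFiniteMonoid) (a b : carrier M) :=
  exists y z, (y ** a) ** z = b.

Lemma divJ_trans (M : orbitFiniteMonoid) (a b c : carrier M) :
  divJ a b -> divJ b c -> divJ a c.
Proof.
move=> [y [z <-]] [y' [z' <-]]; exists (y' ** y), (z ** z').
by rewrite !Defs.mulA.
Qed.

Lemma divJ_refl (M : orbitFiniteMonoid) (a : carrier M) : divJ a a.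
Proof. by exists (@mone M), (@mone M); rewrite mul1x mulx1. Qed.

Lemma divJ_l (M : orbitFiniteMonoid) (a b : carrier M) : divJ b (a ** b).
Proof. by exists a, (@mone M); rewrite mulx1. Qed.

Lemma stab (M : orbitFiniteMonoid) (x c u v : carrier M) :
  x = (u ** (c ** x)) ** v -> exists t, x = t ** (c ** x).
Proof.
move=> e0.
set g := u ** c.
have e1 : x = (g ** x) ** v by rewrite /g -[(u ** c) ** x]Defs.mulA.
have pow : forall n, exists vn, x = (pw g n ** x) ** vn.
  elim=> [|n [vn e]]; first by exists v.
  exists (v ** vn); rewrite pwSr.
  have -> : ((pw g n ** g) ** x) ** (v ** vn) = (pw g n ** ((g ** x) ** v)) ** vn
    by rewrite !Defs.mulA.
  by rewrite -e1.
have [n [m [nm e]]] := pw_repeat g.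
have [l idl] := pw_idem nm e.
have [vl el] := pow l.
have fx : pw g l ** x = x.
  by rewrite {1}el !Defs.mulA idl -el.
have [w ew] : exists w, pw g l = w ** g.
  case: l {idl el fx} => [|l]; first by exists (@mone M); rewrite mul1x.
  by exists (pw g l); rewrite pwSr.
exists (w ** u); by rewrite -{1}fx ew /g !Defs.mulA.
Qed.

Lemma mprod_cat (M : orbitFiniteMonoid) (s1 s2 : seq (carrier M)) :
  mprod (s1 ++ s2) = mprod s1 ** mprod s2.
Proof.
elim: s1 => [|x s1 IH] /=; first by rewrite mul1x.
by rewrite IH Defs.mulA.
Qed.

Lemma mprod_rcons (M : orbitFiniteMonoid) (s : seq (carrier M)) x :
  mprod (rcons s x) = mprod s ** x.
Proof. by rewrite -cats1 mprod_cat /= mulx1. Qed.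

Theorem mainTheorem11 (M : orbitFiniteMonoid) (xs : seq (carrier M)) :
  2 <= size xs ->
  (smooth xs <->
   (forall i, i.+1 < size xs ->
      smooth [:: nth (@mone M) xs i; nth (@mone M) xs i.+1])).
Proof.
move=> hs; split.
- move=> H i hi j hj.
  have hpair : divJ (mprod [:: nth (@mone M) xs i; nth (@mone M) xs i.+1]) (mprod xs).
    have ex : xs = take i xs ++ ([:: nth (@mone M) xs i; nth (@mone M) xs i.+1] ++ drop i.+2 xs).
      have hi' : i < size xs by lia.
      by rewrite /= -(drop_nth (@mone M) hi) -(drop_nth (@mone M) hi') cat_take_drop.
    exists (mprod (take i xs)), (mprod (drop i.+2 xs)).
    by rewrite [in RHS]ex !mprod_cat Defs.mulA.
  apply: (divJ_trans hpair).
  move: hj; case: j => [|[|j]] // _ /=.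
    by apply: H; lia.
  by apply: H; lia.
- move=> H.
  set x := nth (@mone M) xs.
  have hp : forall i, i.+1 < size xs -> divJ (x i ** x i.+1) (x i) /\ divJ (x i ** x i.+1) (x i.+1).
    move=> i hi; have := H i hi => Hi; split.
      by have := Hi 0 erefl; rewrite /= mulx1.
    by have := Hi 1 erefl; rewrite /= mulx1.
  have claim : forall k, k < size xs -> forall j, j <= k -> divJ (mprod (take k.+1 xs)) (x j).
    elim=> [|k IH] hk j hj.
      have -> : j = 0 by lia.
      rewrite (take_nth (@mone M)) ?mprod_rcons ?take0 /= ?mul1x; [exact: divJ_refl|lia].
    have hk' : k < size xs by lia.
    set p := mprod (take k.+1 xs).
    have ep : p = mprod (take k xs) ** x k by rewrite /p (take_nth (@mone M)) // mprod_rcons.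
    have ep' : mprod (take k.+2 xs) = p ** x k.+1 by rewrite (take_nth (@mone M)) // mprod_rcons.
    have [a [b eab]] := IH hk' k (leqnn k).
    have [t et] : exists t, x k = t ** p.
      rewrite ep; apply: (stab (u := a) (v := b)); by rewrite -ep eab.
    have [h1 h2] := hp k hk.
    have d1 : divJ (mprod (take k.+2 xs)) (x k ** x k.+1).
      by exists t, (@mone M); rewrite ep' mulx1 et Defs.mulA.
    move: hj; rewrite leq_eqVlt => /orP [/eqP ->|hj].
      exact: (divJ_trans d1 h2).
    apply: (divJ_trans (divJ_trans d1 h1)).
    apply: (divJ_trans (b := p)); last by apply: IH; lia.
    by rewrite ep; apply: divJ_l.
  move=> j hj.
  have := claim (size xs).-1 ltac:(lia) j ltac:(lia).
  by rewrite prednK ?take_size //; lia.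
Qed.
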